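(* Let $G$ be a graph with vertex set $[n]$. For any Hamiltonian path $\pi\in\mathrm{Ham}(G)$, the number of $G$-friendship parking functions $p$ with $\mathcal{O}_G(p)=\pi$ equals $\prod_{i\in[n]} b(i,\pi,G)$. Consequently $|\mathrm{FPF}(G)|=\sum_{\pi\in\mathrm{Ham}(G)}\prod_{i\in[n]} b(i,\pi,G)$.
   Context: $[n]=\{1,\dots,n\}$, $S_n$ is the set of permutations of $[n]$ in one-line notation $\pi=\pi_1\cdots\pi_n$. Friendship parking process for a graph $G$ on $[n]$ and a parking preference $p\in[n]^n$: cars $1,\dots,n$ enter in order into spots $1,\dots,n$ (initially empty); spot $k$ is available for car $i$ if it is unoccupied when $i$ enters and each of spots $k-1,k+1$ is unoccupied or occupied by a car adjacent to $i$ in $G$ (spots $0,n+1$ count as unoccupied); car $i$ parks in the first available spot $k\ge p_i$, failing otherwise. $\mathrm{FPF}(G)$ is the set of $p$ for which all cars park; for such $p$, $\mathcal{O}_G(p)=\pi\in S_n$ where $\pi_k$ is the car in spot $k$ at the end. $\mathrm{Ham}(G)$ is the set of permutations $\pi\in S_n$ with $\{\pi_k,\pi_{k+1}\}$ an edge of $G$ for all $k\in[n-1]$. Blockers: for $\pi\in\mathrm{Ham}(G)$ and $i\in[n]$, an element $j=\pi_k$ is a blocker for $i$ in $\pi$ if either (1) $j\le i$, or (2) $j>i$ and there is $\ell\in\{\pi_{k-1},\pi_{k+1}\}$ with $\ell<i$ and $\ell$ not adjacent to $i$ in $G$. The blocking sequence $B(i,\pi,G)$ is the longest contiguous block of $\pi$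 ending at $i$ all of whose elements are blockers for $i$; $b(i,\pi,G)$ is its length. *)

(* Defs.v *)
(* Cars and spots are 0-indexed: 'I_n stands for [n]
   (car/spot x in the paper is x+1 here; the order is preserved). *)
From mathcomp Require Import all_boot all_fingroup.
Set Implicit Arguments. Unset Strict Implicit. Unset Printing Implicit Defensive.

Section Friendship.
Variable n : nat.
Variable G : rel 'I_n.

(* parking state: spot -> car parked there (if any) *)
Definition state := {ffun 'I_n -> option 'I_n}.
Definition empty_state : state := [ffun=> None].

Definition occ (st : state) (j : nat) : option 'I_n :=
  if insub j is Some k then st k else None.
Definition occ_left (st : state) (k : 'I_n) : option 'I_n :=
  if val k is j.+1 then occ st j else None.
Definition occ_right (st : state) (k : 'I_n) : option 'I_n := occ st (val k).+1.

Definition nbr_ok (i : 'I_n) (o : option 'I_n) : bool :=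
  if o is Some c then G i c else true.

Definition available (st : state) (i k : 'I_n) : bool :=
  [&& st k == None, nbr_ok i (occ_left st k) & nbr_ok i (occ_right st k)].

Definition park (st : state) (i pi : 'I_n) : option state :=
  if [seq k : 'I_n <- enum 'I_n | (pi <= k) && available st i k] is k :: _
  then Some [ffun j => if j == k then Some i else st j]
  else None.

Definition run (p : {ffun 'I_n -> 'I_n}) : option state :=
  foldl (fun ost i => obind (fun st => park st i (p i)) ost)
        (Some empty_state) (enum 'I_n).

Definition FPF : {set {ffun 'I_n -> 'I_n}} := [set p | run p != None].

(* O_G(p) = pi  <->  the final configuration is spot k |-> car pi_k *)
Definition outcome_is (p : {ffun 'I_n -> 'I_n}) (pi : {perm 'I_n}) : bool :=
  run p == Some [ffun k => Some (pi k)].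

Definition Ham : {set {perm 'I_n}} :=
  [set pi : {perm 'I_n} | [forall k : 'I_n, forall k' : 'I_n,
      (k'.+1 == k :> nat) ==> G (pi k') (pi k)]].

Definition pos_entry (pi : {perm 'I_n}) (j : nat) : option 'I_n :=
  if insub j is Some k then Some (pi k) else None.
Definition left_entry (pi : {perm 'I_n}) (k : 'I_n) : option 'I_n :=
  if val k is j.+1 then pos_entry pi j else None.
Definition right_entry (pi : {perm 'I_n}) (k : 'I_n) : option 'I_n :=
  pos_entry pi (val k).+1.

Definition bad_nbr (i : 'I_n) (o : option 'I_n) : bool :=
  if o is Some l then (l < i) && ~~ G l i else false.

Definition blocker (pi : {perm 'I_n}) (i k : 'I_n) : bool :=
  (pi k <= i) ||
  ((i < pi k) && (bad_nbr i (left_entry pi k) || bad_nbr i (right_entry pi k))).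

(* b(i,pi,G): length of the longest contiguous block of pi ending at i
   consisting of blockers for i *)
Definition bnum (pi : {perm 'I_n}) (i : 'I_n) : nat :=
  let q := val ((pi^-1)%g i) in
  \max_(m < q.+2 | [forall k : 'I_n, ((q < k + m) && (k <= q)) ==> blocker pi i k]) m.

End Friendship.

(* Main.v *)
Require Import Defs.
From mathcomp Require Import all_boot all_fingroup zify.
Set Implicit Arguments. Unset Strict Implicit. Unset Printing Implicit Defensive.

Lemma enum_ord_sorted n : sorted (fun a b : 'I_n => a < b) (enum 'I_n).
Proof.
have := iota_ltn_sorted 0 n; rewrite -val_enum_ord.
by rewrite sorted_map.
Qed.

Lemma filter_head n (P : pred 'I_n) (s : seq 'I_n) kk r :
  sorted (fun a b : 'I_n => a < b) s -> filter P s = kk :: r ->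
  [/\ kk \in s, P kk & forall j, j \in s -> j < kk -> ~~ P j].
Proof.
elim: s r => [|a s IH] r //= Hs.
have Hs' : sorted (fun a b : 'I_n => a < b) s := path_sorted Hs.
case: ifP => Pa.
  case=> <- _; split; rewrite ?inE ?eqxx //.
  move=> j; rewrite inE => /orP[/eqP -> | js]; first by rewrite ltnn.
  have : all (fun b : 'I_n => a < b) s.
    apply: (order_path_min _ Hs) => x y z; exact: ltn_trans.
  by move/allP/(_ j js) => aj ja; move: (ltn_trans aj ja); rewrite ltnn.
move=> /(IH _ Hs') [kin Pk Hj]; split; rewrite ?inE ?kin ?orbT //.
by move=> j; rewrite inE => /orP[/eqP -> | js]; [rewrite Pa | exact: Hj].
Qed.

Definition upd n (st : state n) (k c : 'I_n) : state n :=
  [ffun j => if j == k then Some c else st j].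

Lemma park_Some n G (st st' : state n) (c x : 'I_n) :
  park G st c x = Some st' ->
  exists kk : 'I_n, [/\ x <= kk, available G st c kk,
     (forall j : 'I_n, x <= j -> j < kk -> ~~ available G st c j) &
     st' = upd st kk c].
Proof.
rewrite /park; case E: [seq k : 'I_n <- enum 'I_n | (x <= k) && available G st c k] => [|kk r] //.
case=> <-; have [_ /andP[h1 h2] h3] := filter_head (enum_ord_sorted n) E.
exists kk; split => // j xj jk.
by have := h3 j (mem_enum _ j) jk; rewrite xj.
Qed.

Lemma park_None n G (st : state n) (c x : 'I_n) :
  park G st c x = None -> forall j : 'I_n, x <= j -> ~~ available G st c j.
Proof.
rewrite /park; case E: [seq k : 'I_n <- enum 'I_n | (x <= k) && available G st c k] => [|kk r] // _ j xj.
apply/negP => av.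
have : j \in [seq k : 'I_n <- enum 'I_n | (x <= k) && available G st c k] by rewrite mem_filter xj av mem_enum.
by rewrite E.
Qed.

Lemma park_eq n G (st : state n) (c x q : 'I_n) :
  x <= q -> available G st c q ->
  (forall j : 'I_n, x <= j -> j < q -> ~~ available G st c j) ->
  park G st c x = Some (upd st q c).
Proof.
move=> xq avq Hj.
case E: (park G st c x) => [st'|].
  have [kk [xk avk Hk ->]] := park_Some E.
  have [qk|kq|/val_inj ->] := ltngtP q kk.
  - by have := Hk q xq qk; rewrite avq.
  - by have := Hj kk xk kq; rewrite avk.
  - by [].
by have := park_None E xq; rewrite avq.
Qed.

Definition runk n G (p : {ffun 'I_n -> 'I_n}) (k : nat) : option (state n) :=
  foldl (fun ost (i : 'I_n) => obind (fun st => park G st i (p i)) ost)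
        (Some (empty_state n)) (take k (enum 'I_n)).

Lemma runk_n n (G : rel 'I_n) (p : {ffun 'I_n -> 'I_n}) : runk G p n = run G p.
Proof. by rewrite /runk take_oversize // size_enum_ord. Qed.

Lemma runk0 n (G : rel 'I_n) (p : {ffun 'I_n -> 'I_n}) : runk G p 0 = Some (empty_state n).
Proof. by rewrite /runk take0. Qed.

Lemma runkS n G (p : {ffun 'I_n -> 'I_n}) (c : 'I_n) :
  runk G p c.+1 = obind (fun st => park G st c (p c)) (runk G p c).
Proof.
rewrite /runk (take_nth c); last by rewrite size_enum_ord.
by rewrite foldl_rcons nth_ord_enum.
Qed.

Lemma runk_big n (G : rel 'I_n) (p : {ffun 'I_n -> 'I_n}) m : n <= m -> runk G p m = run G p.
Proof. by move=> h; rewrite /runk take_oversize // size_enum_ord. Qed.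
Lemma runk_None n (G : rel 'I_n) (p : {ffun 'I_n -> 'I_n}) k m :
  k <= m -> runk G p k = None -> runk G p m = None.
Proof.
elim: m => [|m IH]; first by rewrite leqn0 => /eqP ->.
rewrite leq_eqVlt => /orP[/eqP -> //| km] h.
have := IH km h; case: (ltnP m n) => mn.
  by have -> : m = Ordinal mn by []; rewrite runkS => ->.
by rewrite !runk_big // leqW.
Qed.

Lemma park_mono n G (st st' : state n) (c x : 'I_n) j d :
  park G st c x = Some st' -> st j = Some d -> st' j = Some d.
Proof.
move=> /park_Some [kk [_ /andP[/eqP stk _] _ ->]] sj.
rewrite ffunE; case: eqP => // jk; by move: stk; rewrite -jk sj.
Qed.

Lemma runk_mono n (G : rel 'I_n) (p : {ffun 'I_n -> 'I_n}) k m st st' j d :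
  k <= m -> runk G p k = Some st -> runk G p m = Some st' ->
  st j = Some d -> st' j = Some d.
Proof.
elim: m st' => [|m IH] st'.
  by rewrite leqn0 => /eqP -> -> [->].
rewrite leq_eqVlt => /orP[/eqP -> -> [-> //]| km] hk.
case: (ltnP m n) => mn.
  have -> : m.+1 = (Ordinal mn).+1 by [].
  rewrite runkS /=.
  case E: (runk G p m) => [st1|] //= hp sj.
  apply: park_mono hp _; exact: IH km hk E sj.
by rewrite (runk_big _ _ (leqW mn)) -(runk_big G p mn); exact: IH.
Qed.

Definition Sk n (pi : {perm 'I_n}) (k : nat) : state n :=
  [ffun j => if pi j < k then Some (pi j) else None].

Lemma Sk0 n (pi : {perm 'I_n}) : Sk pi 0 = empty_state n.
Proof. by apply/ffunP => j; rewrite !ffunE. Qed.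

Lemma Skn n (pi : {perm 'I_n}) : Sk pi n = [ffun k => Some (pi k)].
Proof. by apply/ffunP => j; rewrite !ffunE ltn_ord. Qed.

Lemma SkS n (pi : {perm 'I_n}) (c : 'I_n) :
  Sk pi c.+1 = upd (Sk pi c) ((pi^-1)%g c) c.
Proof.
apply/ffunP => j; rewrite !ffunE ltnS leq_eqVlt.
have -> : (j == (pi^-1)%g c) = (pi j == c).
  by apply/eqP/eqP => [->|<-]; rewrite ?permKV ?permK.
case: (pi j =P c) => [->|ne] /=; first by rewrite eqxx.
have -> : (nat_of_ord (pi j) == nat_of_ord c) = false by apply/eqP => h; apply: ne; apply: val_inj.
by [].
Qed.

Lemma pos_entry_val n (pi : {perm 'I_n}) (t : 'I_n) : pos_entry pi t = Some (pi t).
Proof. by rewrite /pos_entry valK. Qed.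

Lemma occ_Sk n (pi : {perm 'I_n}) (c : 'I_n) x :
  occ (Sk pi c) x = if pos_entry pi x is Some l then (if l < c then Some l else None) else None.
Proof. by rewrite /occ /pos_entry; case: insub => // t; rewrite ffunE. Qed.

Lemma nbr_Sk n (G : rel 'I_n) (Gsym : symmetric G) (pi : {perm 'I_n}) (c : 'I_n) x :
  nbr_ok G c (occ (Sk pi c) x) = ~~ bad_nbr G c (pos_entry pi x).
Proof.
rewrite occ_Sk; case: pos_entry => [l|] //=.
by case: (l < c) => //=; rewrite negbK Gsym.
Qed.

Lemma avail_Sk n (G : rel 'I_n) (Gsym : symmetric G) (pi : {perm 'I_n}) (c j : 'I_n) :
  available G (Sk pi c) c j =
  [&& ~~ (pi j < c), ~~ bad_nbr G c (left_entry pi j) & ~~ bad_nbr G c (right_entry pi j)].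
Proof.
rewrite /available /occ_right /right_entry nbr_Sk // ffunE.
have -> : (if pi j < c then Some (pi j) else None) == None = ~~ (pi j < c) by case: ifP.
rewrite /occ_left /left_entry; case: (\val j) => [|j0]; by rewrite ?nbr_Sk.
Qed.

Lemma avail_blocker n (G : rel 'I_n) (Gsym : symmetric G) (pi : {perm 'I_n}) (c j : 'I_n) :
  pi j != c -> ~~ available G (Sk pi c) c j = blocker G pi c j.
Proof.
move=> ne; rewrite avail_Sk // /blocker.
have [lt|gt|eq] := ltngtP (pi j) c.
- by [].
- by rewrite /= negb_and !negbK.
- by move: ne; rewrite (val_inj eq) eqxx.
Qed.

Lemma avail_q n (G : rel 'I_n) (Gsym : symmetric G) (pi : {perm 'I_n}) (c : 'I_n) :
  pi \in Ham G -> available G (Sk pi c) c ((pi^-1)%g c).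
Proof.
rewrite inE => /forallP H.
rewrite avail_Sk // permKV ltnn /=.
apply/andP; split.
  rewrite /left_entry.
  case E: (\val ((pi^-1)%g c)) => [|j0] //.
  have j0n : j0 < n by rewrite (leq_trans _ (ltn_ord ((pi^-1)%g c))) // E.
  have -> : j0 = Ordinal j0n by [].
  rewrite pos_entry_val /=.
  have := H ((pi^-1)%g c); move/forallP/(_ (Ordinal j0n))/implyP; rewrite /= E eqxx => /(_ isT).
  by rewrite permKV => ->; rewrite andbF.
rewrite /right_entry /pos_entry.
case: insubP => // t _ tv /=.
have := H t; move/forallP/(_ ((pi^-1)%g c))/implyP; rewrite tv eqxx => /(_ isT).
by rewrite permKV Gsym => ->; rewrite andbF.
Qed.

Lemma Ham_of n (G : rel 'I_n) (Gsym : symmetric G) (pi : {perm 'I_n}) :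
  (forall c : 'I_n, available G (Sk pi c) c ((pi^-1)%g c)) -> pi \in Ham G.
Proof.
move=> H; rewrite inE; apply/forallP => k; apply/forallP => k'; apply/implyP => /eqP kk.
have ne : pi k' != pi k.
  apply/eqP => /perm_inj e; move: kk; rewrite e => /eqP; by rewrite -[_ == _]/(k.+1 == k) eqn_leq ltnn.
have [lt|gt|eq] := ltngtP (pi k') (pi k).
- have := H (pi k); rewrite avail_Sk // permK => /and3P[_ + _].
  have hv : \val k = (nat_of_ord k').+1 by exact: esym kk.
  rewrite /left_entry hv pos_entry_val /= lt /=.
  by rewrite negbK.
- have := H (pi k'); rewrite avail_Sk // permK => /and3P[_ _].
  rewrite /right_entry.
  have -> : (nat_of_ord k').+1 = k by [].
  rewrite pos_entry_val /= gt /= negbK Gsym; done.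
- by move: ne; rewrite (val_inj eq) eqxx.
Qed.

Lemma park_Sk_inv n (G : rel 'I_n) (pi : {perm 'I_n}) (c x : 'I_n) :
  park G (Sk pi c) c x = Some (Sk pi c.+1) ->
  [/\ x <= (pi^-1)%g c, available G (Sk pi c) c ((pi^-1)%g c) &
      forall j : 'I_n, x <= j -> j < (pi^-1)%g c -> ~~ available G (Sk pi c) c j].
Proof.
move=> /park_Some [kk [xk avk Hk E]].
have : Sk pi c.+1 kk = upd (Sk pi c) kk c kk by rewrite E.
rewrite !ffunE eqxx; case: ifP => // _ [pk].
have -> : (pi^-1)%g c = kk by rewrite -pk permK.
by split.
Qed.

Lemma to_outcome n (G : rel 'I_n) (pi : {perm 'I_n}) (p : {ffun 'I_n -> 'I_n}) :
  (forall c : 'I_n, park G (Sk pi c) c (p c) = Some (Sk pi c.+1)) -> outcome_is G p pi.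
Proof.
move=> H.
have claim : forall k, k <= n -> runk G p k = Some (Sk pi k).
  elim=> [|k IH] kn; first by rewrite runk0 Sk0.
  have -> : k = Ordinal kn by [].
  rewrite runkS IH ?(ltnW kn) //; exact: H.
by rewrite /outcome_is -runk_n claim // Skn.
Qed.

Lemma from_outcome n (G : rel 'I_n) (pi : {perm 'I_n}) (p : {ffun 'I_n -> 'I_n}) :
  outcome_is G p pi -> forall c : 'I_n, park G (Sk pi c) c (p c) = Some (Sk pi c.+1).
Proof.
move=> /eqP Ho.
have claim : forall k, k <= n -> runk G p k = Some (Sk pi k).
  elim=> [|k IH] kn; first by rewrite runk0 Sk0.
  have -> : k = Ordinal kn by [].
  rewrite runkS IH ?(ltnW kn) //=.
  case E: (park G (Sk pi k) (Ordinal kn) (p (Ordinal kn))) => [st'|].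
    have E' := E.
    move: E => /park_Some [kk [_ _ _ Est]].
    have h1 : runk G p (Ordinal kn).+1 = Some st' by rewrite runkS IH ?(ltnW kn).
    have h2 : st' kk = Some (Ordinal kn) by rewrite Est ffunE eqxx.
    have hn : runk G p n = Some [ffun k => Some (pi k)] by rewrite runk_n.
    have := runk_mono kn h1 hn h2; rewrite ffunE => -[pk].
    have kq : kk = (pi^-1)%g (Ordinal kn) by rewrite -pk permK.
    by rewrite (SkS pi (Ordinal kn)) Est kq.
  have h0 : runk G p (Ordinal kn).+1 = None by rewrite runkS IH ?(ltnW kn) //= E.
  have := runk_None kn h0.
  by rewrite runk_n Ho.
move=> c.
have := runkS G p c; rewrite !claim ?(ltn_ord c) ?(ltnW (ltn_ord c)) //=.
Qed.

Definition good n (G : rel 'I_n) (pi : {perm 'I_n}) (c x : 'I_n) : bool :=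
  ((nat_of_ord ((pi^-1)%g c)).+1 <= bnum G pi c + x) && (x <= nat_of_ord ((pi^-1)%g c)).

Lemma bnum_bound n (G : rel 'I_n) (pi : {perm 'I_n}) (c : 'I_n) :
  bnum G pi c <= (nat_of_ord ((pi^-1)%g c)).+1.
Proof. by rewrite /bnum /=; apply/bigmax_leqP => m _; rewrite -ltnS ltn_ord. Qed.

Lemma blocker_self n (G : rel 'I_n) (pi : {perm 'I_n}) (c : 'I_n) :
  blocker G pi c ((pi^-1)%g c).
Proof. by rewrite /blocker permKV leqnn. Qed.

Lemma bnum_iff n (G : rel 'I_n) (pi : {perm 'I_n}) (c : 'I_n) (x : nat) :
  x <= nat_of_ord ((pi^-1)%g c) ->
  ((nat_of_ord ((pi^-1)%g c)).+1 <= bnum G pi c + x) =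
  [forall j : 'I_n, ((x <= j) && (j < (pi^-1)%g c)) ==> blocker G pi c j].
Proof.
move=> xq; apply/idP/idP.
  move=> H; apply/forallP => j; apply/implyP => /andP[xj jq].
  apply/negPn/negP => nb.
  have : bnum G pi c <= nat_of_ord ((pi^-1)%g c) - j.
    rewrite /bnum /=; apply/bigmax_leqP => m /forallP Hm.
    rewrite leqNgt; apply/negP => mj.
    have := Hm j; rewrite (negbTE nb) implybF => /negP; apply.
    apply/andP; split; last exact: ltnW.
    move: mj jq; lia.
  move: H xj jq; lia.
move=> /forallP H.
have Hm : (nat_of_ord ((pi^-1)%g c)).+1 - x < (nat_of_ord ((pi^-1)%g c)).+2 by lia.
have : Ordinal Hm <= bnum G pi c.
  rewrite /bnum /=; apply: (@leq_bigmax_cond _ _ (fun m : 'I_(nat_of_ord ((pi^-1)%g c)).+2 => nat_of_ord m) (Ordinal Hm)).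
  apply/forallP => k; apply/implyP => /= /andP[h1 h2].
  rewrite leq_eqVlt in h2; case/orP: h2 => [/eqP kq | kq].
    have -> : k = (pi^-1)%g c by apply: val_inj.
    exact: blocker_self.
  have := H k; rewrite kq andbT; move/implyP; apply.
  move: h1 xq; lia.
rewrite /=; move: xq; lia.
Qed.

Lemma good_iff n (G : rel 'I_n) (Gsym : symmetric G) (pi : {perm 'I_n}) (c x : 'I_n) :
  pi \in Ham G ->
  good G pi c x = (park G (Sk pi c) c x == Some (Sk pi c.+1)).
Proof.
move=> Hpi; apply/idP/eqP.
  move=> /andP[H xq]; rewrite (bnum_iff G xq) in H.
  rewrite SkS; apply: park_eq => //; first exact: avail_q.
  move=> j xj jq.
  have ne : pi j != c by apply/eqP => e; move: jq; rewrite -e permK ltnn.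
  rewrite avail_blocker //.
  by move/forallP: H => /(_ j); rewrite xj jq.
move=> /park_Sk_inv [xq _ Hj].
rewrite /good xq andbT bnum_iff //.
apply/forallP => j; apply/implyP => /andP[xj jq].
have ne : pi j != c by apply/eqP => e; move: jq; rewrite -e permK ltnn.
by rewrite -avail_blocker //; apply: Hj.
Qed.

Lemma sum_range lo hi m :
  \sum_(0 <= i < m) ((lo <= i) && (i <= hi) : nat) = minn m hi.+1 - lo.
Proof.
elim: m => [|m IH]; first by rewrite big_nil.
rewrite big_nat_recr //= IH.
case: (leqP lo m) => h1; case: (leqP m hi) => h2 /=; lia.
Qed.

Lemma card_range n lo hi :
  hi < n -> #|[pred x : 'I_n | (lo <= x) && (x <= hi)]| = hi.+1 - lo.
Proof.
move=> hn; rewrite -sum1_card big_mkcond /=.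
rewrite (eq_bigr (fun i : 'I_n => ((lo <= i) && (i <= hi) : nat))); last first.
  by move=> i _; rewrite inE; case: ifP.
rewrite -(big_mkord xpredT (fun i => ((lo <= i) && (i <= hi) : nat))) sum_range.
by have -> : minn n hi.+1 = hi.+1 by lia.
Qed.

Lemma card_good n (G : rel 'I_n) (pi : {perm 'I_n}) (c : 'I_n) :
  #|[pred x : 'I_n | good G pi c x]| = bnum G pi c.
Proof.
have hb := bnum_bound G pi c.
rewrite -[RHS](_ : (nat_of_ord ((pi^-1)%g c)).+1 - ((nat_of_ord ((pi^-1)%g c)).+1 - bnum G pi c) = _); last by lia.
rewrite -(@card_range n _ _ (ltn_ord _)).
apply: eq_card => x; rewrite !inE /good; congr (_ && _).
by rewrite leq_subLR.
Qed.

Lemma outcome_good n (G : rel 'I_n) (Gsym : symmetric G) (pi : {perm 'I_n})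
  (p : {ffun 'I_n -> 'I_n}) :
  pi \in Ham G -> outcome_is G p pi = [forall c, good G pi c (p c)].
Proof.
move=> Hpi; apply/idP/forallP.
  by move=> Ho c; rewrite good_iff // (from_outcome Ho).
by move=> H; apply: to_outcome => c; apply/eqP; rewrite -good_iff.
Qed.

Lemma part1 n (G : rel 'I_n) (Gsym : symmetric G) (pi : {perm 'I_n}) :
  pi \in Ham G ->
  #|[set p : {ffun 'I_n -> 'I_n} | outcome_is G p pi]| = \prod_(i : 'I_n) bnum G pi i.
Proof.
move=> Hpi.
have -> : #|[set p : {ffun 'I_n -> 'I_n} | outcome_is G p pi]| =
          #|family (fun c : 'I_n => [pred x : 'I_n | good G pi c x])|.
  apply: eq_card => p; rewrite inE outcome_good //.
rewrite card_family foldrE big_map big_enum /=.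
by apply: eq_bigr => c _; rewrite card_good.
Qed.

Lemma run_inv n (G : rel 'I_n) (p : {ffun 'I_n -> 'I_n}) k st :
  k <= n -> runk G p k = Some st ->
  [/\ forall j d, st j = Some d -> d < k,
      forall j j' d, st j = Some d -> st j' = Some d -> j = j' &
      #|[set j | st j != None]| = k].
Proof.
elim: k st => [|k IH] st kn.
  rewrite runk0 => -[<-]; split => //.
  - by move=> j d; rewrite ffunE.
  - by move=> j j' d; rewrite ffunE.
  - by apply/eqP; rewrite cards_eq0; apply/eqP/setP => j; rewrite !inE ffunE.
have -> : k = Ordinal kn by [].
rewrite runkS.
case E: (runk G p (Ordinal kn)) => [st0|] //= Hp.
have [Ha Hb Hc] := IH st0 (ltnW kn) E.
move: Hp => /park_Some [kk [_ /andP[/eqP s0k _] _ ->]].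
split.
- move=> j d; rewrite ffunE; case: eqP => [_ [<-] //| _ /Ha]; exact: ltnW.
- move=> j j' d; rewrite !ffunE.
  case: eqP => [->|jk]; case: eqP => [->|j'k] //.
  + move=> e h; move: (Ha _ _ h); case: e => <-; by rewrite ltnn.
  + move=> h e; move: (Ha _ _ h); case: e => <-; by rewrite ltnn.
  + exact: Hb.
- have -> : [set j | upd st0 kk (Ordinal kn) j != None] = kk |: [set j | st0 j != None].
    apply/setP => j; rewrite !inE ffunE; by case: (j =P kk).
  by rewrite cardsU1 inE s0k eqxx /= Hc.
Qed.

Lemma FPF_outcome n (G : rel 'I_n) (p : {ffun 'I_n -> 'I_n}) st :
  run G p = Some st -> exists pi : {perm 'I_n}, outcome_is G p pi.
Proof.
move=> Hr; have := Hr; rewrite -runk_n => Hr'.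
have [_ Hb Hc] := run_inv (leqnn n) Hr'.
have full : forall j, st j != None.
  have : [set j | st j != None] = setT.
    by apply/eqP; rewrite eqEcard subsetT /= cardsT card_ord Hc.
  move=> Hs j; have : j \in [set j | st j != None] by rewrite Hs inE.
  by rewrite inE.
have eqs : forall j, st j = Some (odflt j (st j)).
  by move=> j; have := full j; case: (st j).
have finj : injective (fun j => odflt j (st j)).
  move=> j j' /= e; apply: (Hb j j' (odflt j (st j))); first exact: eqs.
  by rewrite e; exact: eqs.
exists (perm finj); rewrite /outcome_is Hr; apply/eqP; congr Some.
by apply/ffunP => j; rewrite ffunE permE -eqs.
Qed.

Lemma outcome_Ham n (G : rel 'I_n) (Gsym : symmetric G) (pi : {perm 'I_n})
  (p : {ffun 'I_n -> 'I_n}) : outcome_is G p pi -> pi \in Ham G.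
Proof.
move=> Ho; apply: Ham_of => // c.
by have [_ av _] := park_Sk_inv (from_outcome Ho c).
Qed.

Lemma outcome_uniq n (G : rel 'I_n) (pi pi' : {perm 'I_n}) (p : {ffun 'I_n -> 'I_n}) :
  outcome_is G p pi -> outcome_is G p pi' -> pi = pi'.
Proof.
rewrite /outcome_is => /eqP -> /eqP [e]; apply/permP => k.
by have := congr1 (fun f : state n => f k) e; rewrite !ffunE => -[].
Qed.

Lemma card_sum (T : finType) (A : {set T}) : #|A| = \sum_(x : T) (x \in A : nat).
Proof. by rewrite -sum1_card big_mkcond; apply: eq_bigr => x _; case: (x \in A). Qed.

Theorem corollary2p7 (n : nat) (G : rel 'I_n)
  (Gsym : symmetric G) (Girr : irreflexive G) :
  (forall pi : {perm 'I_n}, pi \in Ham G ->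
     #|[set p : {ffun 'I_n -> 'I_n} | outcome_is G p pi]| =
     \prod_(i : 'I_n) bnum G pi i) /\
  #|FPF G| = \sum_(pi in Ham G) \prod_(i : 'I_n) bnum G pi i.
Proof.
split; first by move=> pi Hpi; exact: part1.
transitivity (\sum_(pi in Ham G) #|[set p : {ffun 'I_n -> 'I_n} | outcome_is G p pi]|); last first.
  by apply: eq_bigr => pi Hpi; exact: part1.
have H1 : #|FPF G| = \sum_(pi : {perm 'I_n}) #|[set p : {ffun 'I_n -> 'I_n} | outcome_is G p pi]|.
  rewrite card_sum.
  rewrite (eq_bigr (fun p => \sum_(pi : {perm 'I_n}) (p \in [set p : {ffun 'I_n -> 'I_n} | outcome_is G p pi] : nat))).
    by rewrite exchange_big; apply: eq_bigr => pi _; rewrite card_sum.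
  move=> p _; rewrite inE.
  case E: (run G p) => [st|] /=.
    have [pi0 Ho0] := FPF_outcome E.
    rewrite (bigD1 pi0) //= inE Ho0 big1 // => pi ne.
    rewrite inE; case Ho: (outcome_is G p pi) => //.
    by move: ne; rewrite (outcome_uniq Ho Ho0) eqxx.
  by rewrite big1 // => pi _; rewrite inE /outcome_is E.
have H2 : \sum_(pi | pi \notin Ham G) #|[set p : {ffun 'I_n -> 'I_n} | outcome_is G p pi]| = 0.
  apply: big1 => pi nH; apply/eqP; rewrite cards_eq0; apply/eqP/setP => p; rewrite !inE.
  by apply/negP => /(outcome_Ham Gsym) Hp; move: nH; rewrite Hp.
by rewrite H1 (bigID (fun pi => pi \in Ham G)) /= H2 addn0.
Qed.
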